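(* For every positive integer $k$, $\theta\in[0,\pi]$, $s_4>0$ and $s_5\ge0$, the function $\frac{H-1}{\sqrt{-Q}}$ is monotonically non-increasing along $\xi(k,\theta,s_4,s_5)$ as long as the integral curve lies in $\mathcal B$.
   Context: Fix an integer $m\ge1$, $n=4m+3$. On $\mathbb R^8$ with coordinates $(X_1,X_2,X_3,Z_1,Z_2,Z_3,Z_4,W)$ set $G=X_1^2+2X_2^2+4mX_3^2$, $H=X_1+2X_2+4mX_3$, $R_1=2Z_1Z_2+4mZ_1Z_3$, $R_2=4Z_2-2Z_1Z_2+4mZ_3$, $R_3=(4m+8)Z_4-2Z_1Z_3-4Z_3$, $R_s=R_1+2R_2+4mR_3$, $Q=G+R_s+(n-1)\frac\epsilon2W-1$, and consider, for $\epsilon\in\{0,1\}$, the system $X_i'=X_i(G-\frac\epsilon2W-1)+R_i+\frac\epsilon2W$ ($i=1,2,3$), $Z_1'=2Z_1(X_1-X_2)$, $Z_2'=2Z_2(G-\frac\epsilon2W-X_2)$, $Z_3'=2Z_3(G-\frac\epsilon2W+X_2-2X_3)$, $Z_4'=2Z_4(G-\frac\epsilon2W-X_3)$, $W'=2W(G-\frac\epsilon2W)$. $\mathcal{RS}=\{Q\le0\}\cap\{H\le1\}\cap\{W\ge0\}\cap\{Z_1,Z_2,Z_3,Z_4\ge0\}\cap\{Z_4^2=Z_2Z_3\}$; $\mathcal B=\mathcal{RS}\cap\{1-Z_1\ge0\}\cap\{X_1-X_2\ge0\}\cap\{Z_2-Z_3\ge0\}\cap\{2(\sqrt{Z_2}-\sqrt{Z_3})+X_3-X_2\ge0\}\cap\{X_1,X_2,X_3\ge0\}$.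 Let $p_0=(1,0,0,0,0,0,0,0)$, $w_1=(-(4m+2)(2m+2),2m+2,2m+2,0,1,1,1,0)$, $w_2=(-4,2,0,0,1,0,0,0)$, $w_3=(-4(m+1)^2\sqrt2,2\sqrt2,(m+2)\sqrt2,0,\sqrt2,0,\tfrac{\sqrt2}{2},0)$, $w_4=(-1,0,\dots,0)$, $w_5=(-(4m+2)\frac\epsilon2,\frac\epsilon2,\frac\epsilon2,0,0,0,0,2)$, $w_6=(0,0,0,1,0,0,0,0)$, $w(\theta,k)=\frac{1+\cos\theta}{2}w_1+\frac{1-\cos\theta}{2}w_2+\frac{\sin\theta}{\sqrt2}w_3+k^2(1+\sin\theta)w_6$. $\xi(k,\theta,s_4,s_5)$ is the maximal integral curve with $\xi(\eta)=p_0+e^{2\eta}(w(\theta,k)+s_4w_4+s_5w_5)+O(e^{(2+\delta)\eta})$ as $\eta\to-\infty$ for some $\delta>0$, with $\epsilon=1$ if $s_5>0$ and $\epsilon=0$ if $s_5=0$. (Along such a curve with $s_4>0$, $Q<0$.) *)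

(* Defs.v *)
From Stdlib Require Import Reals.
From Coquelicot Require Import Coquelicot.
Open Scope R_scope.

Record pt := mkpt { X1 : R; X2 : R; X3 : R; Z1 : R; Z2 : R; Z3 : R; Z4 : R; W : R }.

Definition coord (i : nat) (p : pt) : R :=
  match i with
  | 0%nat => X1 p | 1%nat => X2 p | 2%nat => X3 p | 3%nat => Z1 p
  | 4%nat => Z2 p | 5%nat => Z3 p | 6%nat => Z4 p | _ => W p
  end.

Definition padd (p q : pt) : pt :=
  mkpt (X1 p + X1 q) (X2 p + X2 q) (X3 p + X3 q) (Z1 p + Z1 q)
       (Z2 p + Z2 q) (Z3 p + Z3 q) (Z4 p + Z4 q) (W p + W q).
Definition pscale (a : R) (p : pt) : pt :=
  mkpt (a * X1 p) (a * X2 p) (a * X3 p) (a * Z1 p)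
       (a * Z2 p) (a * Z3 p) (a * Z4 p) (a * W p).

Section Sys.
Variable m : nat.
Variable eps : R.     (* epsilon in {0,1} *)
Let M4 : R := 4 * INR m.
Let n : R := 4 * INR m + 3.

Definition Gf (p : pt) : R := X1 p ^ 2 + 2 * X2 p ^ 2 + M4 * X3 p ^ 2.
Definition Hf (p : pt) : R := X1 p + 2 * X2 p + M4 * X3 p.
Definition R1f (p : pt) : R := 2 * Z1 p * Z2 p + M4 * Z1 p * Z3 p.
Definition R2f (p : pt) : R := 4 * Z2 p - 2 * Z1 p * Z2 p + M4 * Z3 p.
Definition R3f (p : pt) : R := (M4 + 8) * Z4 p - 2 * Z1 p * Z3 p - 4 * Z3 p.
Definition Rsf (p : pt) : R := R1f p + 2 * R2f p + M4 * R3f p.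
Definition Qf (p : pt) : R := Gf p + Rsf p + (n - 1) * (eps / 2) * W p - 1.

Definition vf (p : pt) : pt :=
  let g := Gf p - eps / 2 * W p in
  mkpt (X1 p * (g - 1) + R1f p + eps / 2 * W p)
       (X2 p * (g - 1) + R2f p + eps / 2 * W p)
       (X3 p * (g - 1) + R3f p + eps / 2 * W p)
       (2 * Z1 p * (X1 p - X2 p))
       (2 * Z2 p * (g - X2 p))
       (2 * Z3 p * (g + X2 p - 2 * X3 p))
       (2 * Z4 p * (g - X3 p))
       (2 * W p * g).

Definition inRS (p : pt) : Prop :=
  Qf p <= 0 /\ Hf p <= 1 /\ 0 <= W p /\
  0 <= Z1 p /\ 0 <= Z2 p /\ 0 <= Z3 p /\ 0 <= Z4 p /\
  Z4 p ^ 2 = Z2 p * Z3 p.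

Definition inB (p : pt) : Prop :=
  inRS p /\ 0 <= 1 - Z1 p /\ 0 <= X1 p - X2 p /\ 0 <= Z2 p - Z3 p /\
  0 <= 2 * (sqrt (Z2 p) - sqrt (Z3 p)) + X3 p - X2 p /\
  0 <= X1 p /\ 0 <= X2 p /\ 0 <= X3 p.

Definition monf (p : pt) : R := (Hf p - 1) / sqrt (- Qf p).

Definition integral_curve (xi : R -> pt) (T : Rbar) : Prop :=
  forall t : R, Rbar_lt t T -> forall i : nat, (i < 8)%nat ->
    is_derive (fun s => coord i (xi s)) t (coord i (vf (xi t))).

Definition maximal_integral_curve (xi : R -> pt) (T : Rbar) : Prop :=
  integral_curve xi T /\
  forall (xi' : R -> pt) (T' : Rbar),
    integral_curve xi' T' -> Rbar_le T T' ->
    (forall t : R, Rbar_lt t T -> xi' t = xi t) -> T' = T.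

Definition asymptotic_to (xi : R -> pt) (T : Rbar) (p0 v : pt) : Prop :=
  exists delta C eta0 : R, 0 < delta /\ Rbar_lt eta0 T /\
    forall eta : R, eta <= eta0 -> forall i : nat, (i < 8)%nat ->
      Rabs (coord i (xi eta) - coord i (padd p0 (pscale (exp (2 * eta)) v)))
        <= C * exp ((2 + delta) * eta).
End Sys.

Definition epsof (s5 : R) : R := if Rlt_dec 0 s5 then 1 else 0.

Definition p0 : pt := mkpt 1 0 0 0 0 0 0 0.
Definition w1 (m : nat) : pt :=
  mkpt (- (4 * INR m + 2) * (2 * INR m + 2)) (2 * INR m + 2) (2 * INR m + 2) 0 1 1 1 0.
Definition w2 : pt := mkpt (-4) 2 0 0 1 0 0 0.
Definition w3 (m : nat) : pt :=
  mkpt (- 4 * (INR m + 1) ^ 2 * sqrt 2) (2 * sqrt 2) ((INR m + 2) * sqrt 2)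
       0 (sqrt 2) 0 (sqrt 2 / 2) 0.
Definition w4 : pt := mkpt (-1) 0 0 0 0 0 0 0.
Definition w5 (m : nat) (eps : R) : pt :=
  mkpt (- (4 * INR m + 2) * (eps / 2)) (eps / 2) (eps / 2) 0 0 0 0 2.
Definition w6 : pt := mkpt 0 0 0 1 0 0 0 0.

Definition wtk (m : nat) (theta k : R) : pt :=
  padd (pscale ((1 + cos theta) / 2) (w1 m))
  (padd (pscale ((1 - cos theta) / 2) w2)
  (padd (pscale (sin theta / sqrt 2) (w3 m))
        (pscale (k ^ 2 * (1 + sin theta)) w6))).

Definition is_xi (m : nat) (k theta s4 s5 : R) (xi : R -> pt) (T : Rbar) : Prop :=
  let eps := epsof s5 in
  maximal_integral_curve m eps xi T /\
  asymptotic_to xi T p0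
    (padd (wtk m theta k) (padd (pscale s4 w4) (pscale s5 (w5 m eps)))).

(* Main.v *)
Require Import Defs.
From Stdlib Require Import Reals Lra Lia Psatz.
From Coquelicot Require Import Coquelicot.
Open Scope R_scope.

Lemma Dc (c x : R) : is_derive (fun _ : R => c) x 0.
Proof. auto_derive; auto. Qed.
Lemma Dp (f g : R -> R) x a b : is_derive f x a -> is_derive g x b ->
  is_derive (fun s => f s + g s) x (a + b).
Proof. intros; now apply (is_derive_plus f g). Qed.
Lemma Ds (f g : R -> R) x a b : is_derive f x a -> is_derive g x b ->
  is_derive (fun s => f s - g s) x (a - b).
Proof. intros; now apply (is_derive_minus f g). Qed.
Lemma Do (f : R -> R) x a : is_derive f x a ->
  is_derive (fun s => - f s) x (- a).
Proof. intros; now apply (is_derive_opp f). Qed.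
Lemma Dm (f g : R -> R) x a b : is_derive f x a -> is_derive g x b ->
  is_derive (fun s => f s * g s) x (a * g x + f x * b).
Proof. intros; apply (is_derive_mult f g); auto. intros; apply Rmult_comm. Qed.
Lemma Deq (f : R -> R) (x a b : R) : is_derive f x a -> a = b -> is_derive f x b.
Proof. intros H ->; exact H. Qed.
Lemma Dpw (f : R -> R) x a : is_derive f x a ->
  is_derive (fun s => f s ^ 2) x (2 * a * f x).
Proof. intros H. eapply Deq. apply (is_derive_pow f 2 x a H). simpl. ring. Qed.


Ltac dstep := lazymatch goal with
 | |- is_derive (fun _ => ?c) _ _ => apply Dc
 | |- is_derive (fun s => @?A s + @?B s) _ _ => eapply (Dp A B)
 | |- is_derive (fun s => @?A s - @?B s) _ _ => eapply (Ds A B)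
 | |- is_derive (fun s => - @?A s) _ _ => eapply (Do A)
 | |- is_derive (fun s => @?A s * @?B s) _ _ => eapply (Dm A B)
 | |- is_derive (fun s => @?A s ^ 2) _ _ => eapply (Dpw A)
 | |- _ => eassumption
 end.
Ltac dtac := repeat dstep.

Section T.
Variable (m : nat) (e : R) (xi : R -> pt) (t : R).
Hypothesis h1 : is_derive (fun s => X1 (xi s)) t (X1 (vf m e (xi t))).
Hypothesis h2 : is_derive (fun s => X2 (xi s)) t (X2 (vf m e (xi t))).
Hypothesis h3 : is_derive (fun s => X3 (xi s)) t (X3 (vf m e (xi t))).
Hypothesis h4 : is_derive (fun s => Z1 (xi s)) t (Z1 (vf m e (xi t))).
Hypothesis h5 : is_derive (fun s => Z2 (xi s)) t (Z2 (vf m e (xi t))).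
Hypothesis h6 : is_derive (fun s => Z3 (xi s)) t (Z3 (vf m e (xi t))).
Hypothesis h7 : is_derive (fun s => Z4 (xi s)) t (Z4 (vf m e (xi t))).
Hypothesis h8 : is_derive (fun s => W (xi s)) t (W (vf m e (xi t))).

Definition Kf (p : pt) := Qf m e p - (Hf m p - 1) * (1 + e / 2 * W p).
Definition gg (p : pt) := Gf m p - e / 2 * W p.
Definition cf (p : pt) := 2 * gg p - 1 - e / 2 * W p.

Lemma dK : is_derive (fun s => Kf (xi s)) t
  (Kf (xi t) * cf (xi t) + (Hf m (xi t) - 1) * (1 - e / 2 * W (xi t)) * Gf m (xi t)).
Proof.
  eapply Deq. unfold Kf, Qf, Gf, Rsf, R1f, R2f, R3f, Hf. dtac.
  unfold vf; cbn [X1 X2 X3 Z1 Z2 Z3 Z4 W]; unfold cf, gg, Kf, Qf, Gf, Rsf, R1f, R2f, R3f, Hf. ring.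
Qed.

Lemma dH : is_derive (fun s => Hf m (xi s) - 1) t
  ((Hf m (xi t) - 1) * (gg (xi t) - 1) + Qf m e (xi t)).
Proof.
  eapply Deq. unfold Hf. dtac.
  unfold vf; cbn [X1 X2 X3 Z1 Z2 Z3 Z4 W]; unfold gg, Qf, Gf, Rsf, R1f, R2f, R3f, Hf. ring.
Qed.

Lemma dQn : is_derive (fun s => - Qf m e (xi s)) t
  (- (2 * Qf m e (xi t) * gg (xi t) + e * W (xi t) * (Hf m (xi t) - 1))).
Proof.
  eapply Deq. unfold Qf, Gf, Rsf, R1f, R2f, R3f. dtac.
  unfold vf; cbn [X1 X2 X3 Z1 Z2 Z3 Z4 W]; unfold gg, Qf, Gf, Rsf, R1f, R2f, R3f, Hf. field.
Qed.

Lemma dC : ex_derive (fun s => cf (xi s)) t.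
Proof.
  eexists. unfold cf, gg, Gf. dtac.
Qed.
End T.

Lemma coords_der m e xi T (Hic : integral_curve m e xi T) (t : R) (Ht : Rbar_lt t T) :
  is_derive (fun s => X1 (xi s)) t (X1 (vf m e (xi t))) /\
  is_derive (fun s => X2 (xi s)) t (X2 (vf m e (xi t))) /\
  is_derive (fun s => X3 (xi s)) t (X3 (vf m e (xi t))) /\
  is_derive (fun s => Z1 (xi s)) t (Z1 (vf m e (xi t))) /\
  is_derive (fun s => Z2 (xi s)) t (Z2 (vf m e (xi t))) /\
  is_derive (fun s => Z3 (xi s)) t (Z3 (vf m e (xi t))) /\
  is_derive (fun s => Z4 (xi s)) t (Z4 (vf m e (xi t))) /\
  is_derive (fun s => W (xi s)) t (W (vf m e (xi t))).
Proof.
  refine (conj (Hic t Ht (0%nat) _) (conj (Hic t Ht (1%nat) _) (conj (Hic t Ht (2%nat) _)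
    (conj (Hic t Ht (3%nat) _) (conj (Hic t Ht (4%nat) _) (conj (Hic t Ht (5%nat) _)
    (conj (Hic t Ht (6%nat) _) (Hic t Ht (7%nat) _)))))))); lia.
Qed.

Lemma rbar_le_lt (x y : R) (T : Rbar) : x <= y -> Rbar_lt y T -> Rbar_lt x T.
Proof. destruct T; simpl; intros; auto; lra. Qed.

Lemma gronwall (K c r : R -> R) (T : Rbar) (a b : R) :
  a <= b -> Rbar_lt b T ->
  (forall t : R, Rbar_lt t T -> is_derive K t (K t * c t + r t)) ->
  (forall t : R, Rbar_lt t T -> continuous c t) ->
  (forall t, a <= t <= b -> r t <= 0) -> K a < 0 -> K b < 0.
Proof.
  intros Hab HbT HK Hc Hr Ha.
  set (I := fun u => RInt c a u).
  assert (HI : forall t : R, Rbar_lt t T -> is_derive I t (c t)).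
  { intros t Ht. apply (is_derive_RInt c I a t).
    - apply (@locally_open R_UniformSpace (fun u : R => Rbar_lt u T)). apply open_Rbar_lt.
      2: exact Ht.
      intros u Hu. unfold I. apply (RInt_correct (V := R_CompleteNormedModule) c a u). apply (ex_RInt_continuous (V := R_CompleteNormedModule)).
      intros z Hz. apply Hc. apply rbar_le_lt with (Rmax a u). lra.
      unfold Rmax; destruct Rle_dec; [exact Hu | apply rbar_le_lt with b; auto; lra].
    - apply Hc; auto. }
  set (L := fun u => K u * exp (- I u)).
  assert (HL: forall t : R, Rbar_lt t T -> is_derive L t (r t * exp (- I t))).
  { intros t Ht. unfold L. eapply Deq. apply (Dm K (fun u => exp (- I u))). apply HK, Ht.
    apply (is_derive_comp exp (fun u => - I u)). apply is_derive_exp. apply (Do I). apply HI, Ht.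
    unfold scal; simpl; unfold mult; simpl. ring. }
  destruct (MVT_gen L a b (fun t => r t * exp (- I t))) as [c0 [Hc0 Heq]].
  - intros x Hx. rewrite Rmin_left, Rmax_right in Hx by lra. apply HL.
    apply rbar_le_lt with b; auto; lra.
  - intros x Hx. rewrite Rmin_left, Rmax_right in Hx by lra.
    apply continuity_pt_filterlim. apply (ex_derive_continuous (K:=R_AbsRing) (V:=R_NormedModule) L x). eexists; apply HL.
    apply rbar_le_lt with b; auto; lra.
  - rewrite Rmin_left, Rmax_right in Hc0 by lra.
    assert (Hr0 := Hr c0 Hc0).
    assert (E1 := exp_pos (- I c0)). assert (E2 := exp_pos (- I a)). assert (E3 := exp_pos (- I b)).
    unfold L in Heq.
    assert (0 <= - r c0 * exp (- I c0) * (b - a)).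
    { apply Rmult_le_pos; [apply Rmult_le_pos|]; lra. }
    assert (K a * exp (- I a) < 0) by nra.
    destruct (Rlt_or_le (K b) 0); auto. nra.
Qed.

Lemma rsign (m : nat) (e : R) (p : pt) : (1 <= m)%nat -> 0 <= e <= 1 -> inB m e p ->
  (Hf m p - 1) * (1 - e / 2 * W p) * Gf m p <= 0.
Proof.
  intros Hm He [[HQ [HH [HW [H1 [H2 [H3 [H4 H5]]]]]]] [HZ1 [_ [HZ23 _]]]].
  assert (Hmm : 1 <= INR m) by (apply (le_INR 1); exact Hm).
  assert (HZ43 : Z3 p <= Z4 p) by nra.
  assert (HG : 0 <= Gf m p).
  { unfold Gf. pose proof (pow2_ge_0 (X1 p)). pose proof (pow2_ge_0 (X2 p)). pose proof (pow2_ge_0 (X3 p)).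
    assert (0 <= 4 * INR m * X3 p ^ 2) by (apply Rmult_le_pos; lra). lra. }
  assert (HR1 : 0 <= R1f m p).
  { unfold R1f. assert (0 <= Z1 p * Z2 p) by (apply Rmult_le_pos; lra).
    assert (0 <= INR m * (Z1 p * Z3 p)) by (apply Rmult_le_pos; [lra | apply Rmult_le_pos; lra]). lra. }
  assert (HR2 : 0 <= R2f m p).
  { unfold R2f. assert (0 <= Z2 p * (1 - Z1 p)) by (apply Rmult_le_pos; lra).
    assert (0 <= INR m * Z3 p) by (apply Rmult_le_pos; lra). lra. }
  assert (HR3 : 0 <= R3f m p).
  { unfold R3f. assert (0 <= Z3 p * (1 - Z1 p)) by (apply Rmult_le_pos; lra).
    assert (0 <= INR m * (Z4 p - Z3 p)) by (apply Rmult_le_pos; lra).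
    assert (0 <= INR m * Z3 p) by (apply Rmult_le_pos; lra). lra. }
  assert (HRs : 0 <= Rsf m p).
  { unfold Rsf. assert (0 <= INR m * R3f m p) by (apply Rmult_le_pos; lra). lra. }
  unfold Qf in HQ.
  assert (HeW : 0 <= e * W p) by (apply Rmult_le_pos; lra).
  assert (0 <= INR m * (e * W p)) by (apply Rmult_le_pos; lra).
  assert (HeW2 : e / 2 * W p <= 1) by lra.
  assert (0 <= (1 - Hf m p) * (1 - e / 2 * W p)) by (apply Rmult_le_pos; lra).
  assert (0 <= (1 - Hf m p) * (1 - e / 2 * W p) * Gf m p) by (apply Rmult_le_pos; lra).
  lra.
Qed.

Lemma sign_alg (Hh Q g W e : R) : Hh <= 1 -> 0 <= W -> 0 <= e ->
  Q - (Hh - 1) * (1 + e / 2 * W) < 0 ->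
  (((Hh - 1) * (g - 1) + Q) * sqrt (- Q) -
    (Hh - 1) * ((- (2 * Q * g + e * W * (Hh - 1))) / (2 * sqrt (- Q)))) / (sqrt (- Q)) ^ 2 <= 0.
Proof.
  intros HH HW He HK.
  assert (0 <= (1 - Hh) * (1 + e / 2 * W)) by (apply Rmult_le_pos; [lra | assert (0 <= e * W) by (apply Rmult_le_pos; lra); lra]).
  assert (Hq : 0 < - Q) by lra.
  set (s := sqrt (- Q)).
  assert (Hs : 0 < s) by (apply sqrt_lt_R0; lra).
  assert (Hss : s * s = - Q) by (apply sqrt_sqrt; lra).
  set (Nu := ((Hh - 1) * (g - 1) + Q) * s -
    (Hh - 1) * ((- (2 * Q * g + e * W * (Hh - 1))) / (2 * s))).
  assert (HN : Nu * (2 * s) = 2 * ((Hh - 1) * (g - 1) + Q) * (s * s) + (Hh - 1) * (2 * Q * g + e * W * (Hh - 1))).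
  { unfold Nu. field. lra. }
  rewrite Hss in HN. clearbody Nu s.
  assert (Ha : 0 <= 1 - Hh) by lra.
  assert (Hew : 0 <= e / 2 * W * (1 - Hh)) by (apply Rmult_le_pos; [|lra]; apply Rmult_le_pos; lra).
  assert (Hqa' : - Q - (1 - Hh) - e / 2 * W * (1 - Hh) = -(Q - (Hh - 1) * (1 + e / 2 * W))) by field.
  assert (P1 : 0 <= (- Q) * (- Q - (1 - Hh) - e / 2 * W * (1 - Hh))) by (apply Rmult_le_pos; lra).
  assert (P2 : 0 <= e / 2 * W * (1 - Hh) * (- Q - (1 - Hh))) by (apply Rmult_le_pos; lra).
  assert (HN2 : Nu * (2 * s) = 2 * (- (- Q) * (- Q - (1 - Hh) - e / 2 * W * (1 - Hh)) - e / 2 * W * (1 - Hh) * (- Q - (1 - Hh)))).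
  { rewrite HN. field. }
  assert (HNu : Nu <= 0) by nra.
  unfold Rdiv. assert (0 < / s ^ 2) by (apply Rinv_0_lt_compat; nra).
  nra.
Qed.

Lemma tb (c r E : R) : 0 <= c -> Rabs r <= E -> c * r <= c * E /\ - (c * E) <= c * r.
Proof. intros Hc Hr. unfold Rabs in Hr; destruct Rcase_abs; split; nra. Qed.

Lemma pb (x y M : R) : Rabs x <= M -> Rabs y <= M -> Rabs (x * y) <= M * M.
Proof.
  intros Hx Hy. rewrite Rabs_mult.
  apply Rmult_le_compat; auto; apply Rabs_pos.
Qed.

Definition LinE (mm e d1 d2 d3 d5 d6 d7 d8 : R) :=
  d1 - 2 * d2 - 4 * mm * d3 + 8 * d5 - 8 * mm * d6 + 16 * mm * (mm + 2) * d7
  + (4 * mm + 2) * (e / 2) * d8.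
Definition QuadE (mm e d1 d2 d3 d4 d5 d6 d8 : R) :=
  d1 ^ 2 + 2 * d2 ^ 2 + 4 * mm * d3 ^ 2 - 2 * d4 * d5 - 4 * mm * d4 * d6
  - e / 2 * d8 * (d1 + 2 * d2 + 4 * mm * d3).

Lemma K_expand m e p : Kf m e p =
  LinE (INR m) e (X1 p - 1) (X2 p) (X3 p) (Z2 p) (Z3 p) (Z4 p) (W p) +
  QuadE (INR m) e (X1 p - 1) (X2 p) (X3 p) (Z1 p) (Z2 p) (Z3 p) (W p).
Proof. unfold Kf, LinE, QuadE, Qf, Gf, Hf, Rsf, R1f, R2f, R3f. field. Qed.

Lemma lin_bound mm e E r1 r2 r3 r5 r6 r7 r8 : 0 <= mm -> 0 <= e ->
  Rabs r1 <= E -> Rabs r2 <= E -> Rabs r3 <= E -> Rabs r5 <= E -> Rabs r6 <= E ->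
  Rabs r7 <= E -> Rabs r8 <= E ->
  LinE mm e r1 r2 r3 r5 r6 r7 r8 <= (11 + 12 * mm + 16 * mm * (mm + 2) + (2 * mm + 1) * e) * E.
Proof.
  intros Hm He h1 h2 h3 h5 h6 h7 h8.
  destruct (tb 1 r1 E) as [a1 b1]; try lra; auto.
  destruct (tb 2 r2 E) as [a2 b2]; try lra; auto.
  destruct (tb (4 * mm) r3 E) as [a3 b3]; try lra; auto.
  destruct (tb 8 r5 E) as [a5 b5]; try lra; auto.
  destruct (tb (8 * mm) r6 E) as [a6 b6]; try lra; auto.
  destruct (tb (16 * mm * (mm + 2)) r7 E) as [a7 b7]; try nra; auto.
  destruct (tb ((4 * mm + 2) * (e / 2)) r8 E) as [a8 b8]; try nra; auto.
  unfold LinE. lra.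
Qed.

Lemma quad_bound mm e M d1 d2 d3 d4 d5 d6 d8 : 0 <= mm -> 0 <= e ->
  Rabs d1 <= M -> Rabs d2 <= M -> Rabs d3 <= M -> Rabs d4 <= M -> Rabs d5 <= M -> Rabs d6 <= M ->
  Rabs d8 <= M ->
  QuadE mm e d1 d2 d3 d4 d5 d6 d8 <= (5 + 8 * mm + 3 / 2 * e + 2 * e * mm) * (M * M).
Proof.
  intros Hm He h1 h2 h3 h4 h5 h6 h8.
  destruct (tb 1 (d1 * d1) (M * M)) as [a1 b1]; try lra; auto using pb.
  destruct (tb 2 (d2 * d2) (M * M)) as [a2 b2]; try lra; auto using pb.
  destruct (tb (4 * mm) (d3 * d3) (M * M)) as [a3 b3]; try lra; auto using pb.
  destruct (tb 2 (d4 * d5) (M * M)) as [a4 b4]; try lra; auto using pb.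
  destruct (tb (4 * mm) (d4 * d6) (M * M)) as [a5 b5]; try lra; auto using pb.
  destruct (tb (e / 2) (d8 * d1) (M * M)) as [a6 b6]; try lra; auto using pb.
  destruct (tb e (d8 * d2) (M * M)) as [a7 b7]; try lra; auto using pb.
  destruct (tb (2 * e * mm) (d8 * d3) (M * M)) as [a8 b8]; try nra; auto using pb.
  unfold QuadE. lra.
Qed.

Lemma expl (a b : R) : a <= b -> exp a <= exp b.
Proof. intros H. destruct (Rle_lt_or_eq_dec a b H) as [h|h]; [left; apply exp_increasing; exact h | right; subst; reflexivity]. Qed.

Lemma dbound (a b vi ep C x Vb : R) : Rabs (a - (b + ep * vi)) <= C * (ep * x) ->
  Rabs vi <= Vb -> 0 < ep -> 0 <= C -> x <= 1 -> 0 < x -> Rabs (a - b) <= ep * (Vb + C).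
Proof.
  intros H1 H2 Hep HC Hx Hx0.
  replace (a - b) with ((a - (b + ep * vi)) + ep * vi) by field.
  eapply Rle_trans. apply Rabs_triang. rewrite Rabs_mult, (Rabs_pos_eq ep) by lra.
  assert (C * (ep * x) <= C * ep) by (apply Rmult_le_compat_l; [lra|]; nra).
  assert (ep * Rabs vi <= ep * Vb) by (apply Rmult_le_compat_l; lra).
  nra.
Qed.

Lemma early (m : nat) (e s4 : R) (xi : R -> pt) (v : pt) (delta C eta0 t1 : R) :
  0 <= e -> 0 < s4 -> 0 < delta ->
  LinE (INR m) e (X1 v) (X2 v) (X3 v) (Z2 v) (Z3 v) (Z4 v) (W v) = - s4 ->
  (forall eta : R, eta <= eta0 -> forall i : nat, (i < 8)%nat ->
      Rabs (coord i (xi eta) - coord i (padd p0 (pscale (exp (2 * eta)) v)))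
        <= C * exp ((2 + delta) * eta)) ->
  exists t0, t0 <= t1 /\ t0 <= eta0 /\ Kf m e (xi t0) < 0.
Proof.
  intros He Hs4 Hd HL Has.
  assert (HC : 0 <= C).
  { pose proof (Has eta0 (Rle_refl _) 0%nat ltac:(lia)) as H0.
    pose proof (Rabs_pos (coord 0 (xi eta0) - coord 0 (padd p0 (pscale (exp (2 * eta0)) v)))).
    pose proof (exp_pos ((2 + delta) * eta0)).
    destruct (Rle_or_lt 0 C); auto. nra. }
  assert (Hmm : 0 <= INR m) by apply pos_INR.
  remember (INR m) as mm eqn:Emm.
  remember (11 + 12 * mm + 16 * mm * (mm + 2) + (2 * mm + 1) * e) as Lc eqn:ELc.
  remember (5 + 8 * mm + 3 / 2 * e + 2 * e * mm) as Aq eqn:EAq.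
  assert (HLc : 0 <= Lc) by (subst Lc; nra).
  assert (HAq : 0 <= Aq) by (subst Aq; nra).
  remember (Rabs (X1 v) + Rabs (X2 v) + Rabs (X3 v) + Rabs (Z1 v) + Rabs (Z2 v) + Rabs (Z3 v) + Rabs (Z4 v) + Rabs (W v)) as Vb eqn:EVb.
  pose proof (Rabs_pos (X1 v)). pose proof (Rabs_pos (X2 v)). pose proof (Rabs_pos (X3 v)).
  pose proof (Rabs_pos (Z1 v)). pose proof (Rabs_pos (Z2 v)). pose proof (Rabs_pos (Z3 v)).
  pose proof (Rabs_pos (Z4 v)). pose proof (Rabs_pos (W v)).
  assert (V1 : Rabs (X1 v) <= Vb) by lra. assert (V2 : Rabs (X2 v) <= Vb) by lra.
  assert (V3 : Rabs (X3 v) <= Vb) by lra. assert (V4 : Rabs (Z1 v) <= Vb) by lra.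
  assert (V5 : Rabs (Z2 v) <= Vb) by lra. assert (V6 : Rabs (Z3 v) <= Vb) by lra.
  assert (V7 : Rabs (Z4 v) <= Vb) by lra. assert (V8 : Rabs (W v) <= Vb) by lra.
  assert (HVb : 0 <= Vb) by lra.
  remember (Lc * C) as u eqn:Eu.
  assert (Hu : 0 <= u) by (subst u; apply Rmult_le_pos; lra).
  remember (Aq * (Vb + C) ^ 2) as w eqn:Ew.
  assert (Hw : 0 <= w) by (subst w; apply Rmult_le_pos; [lra | apply pow2_ge_0]).
  remember (s4 / (2 * (u + 1))) as al eqn:Eal.
  remember (s4 / (2 * (w + 1))) as be eqn:Ebe.
  assert (Hal : 0 < al) by (subst al; apply Rdiv_lt_0_compat; lra).
  assert (Hbe : 0 < be) by (subst be; apply Rdiv_lt_0_compat; lra).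
  assert (Hal2 : al * (2 * (u + 1)) = s4) by (subst al; field; lra).
  assert (Hbe2 : be * (2 * (w + 1)) = s4) by (subst be; field; lra).
  remember (Rmin (Rmin eta0 t1) (Rmin 0 (Rmin (ln al / delta) (ln be / 2)))) as eta eqn:Eeta.
  assert (Hm1 : eta <= eta0 /\ eta <= t1 /\ eta <= 0 /\ eta <= ln al / delta /\ eta <= ln be / 2).
  { subst eta. repeat split.
    - eapply Rle_trans; [apply Rmin_l|apply Rmin_l].
    - eapply Rle_trans; [apply Rmin_l|apply Rmin_r].
    - eapply Rle_trans; [apply Rmin_r|apply Rmin_l].
    - eapply Rle_trans; [apply Rmin_r|]. eapply Rle_trans; [apply Rmin_r|apply Rmin_l].
    - eapply Rle_trans; [apply Rmin_r|]. eapply Rle_trans; [apply Rmin_r|apply Rmin_r]. }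
  destruct Hm1 as [Heta0 [Het1 [Heta [Hetal Hetbe]]]].
  exists eta. split; [exact Het1|split; [exact Heta0|]].
  assert (Hx1 : exp (delta * eta) <= 1) by (rewrite <- exp_0; apply expl; nra).
  assert (Hxa : exp (delta * eta) <= al).
  { rewrite <- (exp_ln al) by lra. apply expl.
    apply Rmult_le_compat_l with (r := delta) in Hetal; [|lra].
    replace (delta * (ln al / delta)) with (ln al) in Hetal by (field; lra). exact Hetal. }
  assert (Hepb : exp (2 * eta) <= be).
  { rewrite <- (exp_ln be) by lra. apply expl. lra. }
  assert (Hexp : exp ((2 + delta) * eta) = exp (2 * eta) * exp (delta * eta)).
  { rewrite <- exp_plus. f_equal. field. }
  pose proof (exp_pos (2 * eta)) as Hep. pose proof (exp_pos (delta * eta)) as Hx.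
  remember (exp (2 * eta)) as ep eqn:Eep.
  remember (exp (delta * eta)) as x eqn:Ex.
  pose proof (Has eta Heta0 0%nat ltac:(lia)) as B1.
  pose proof (Has eta Heta0 1%nat ltac:(lia)) as B2.
  pose proof (Has eta Heta0 2%nat ltac:(lia)) as B3.
  pose proof (Has eta Heta0 3%nat ltac:(lia)) as B4.
  pose proof (Has eta Heta0 4%nat ltac:(lia)) as B5.
  pose proof (Has eta Heta0 5%nat ltac:(lia)) as B6.
  pose proof (Has eta Heta0 6%nat ltac:(lia)) as B7.
  pose proof (Has eta Heta0 7%nat ltac:(lia)) as B8.
  rewrite <- Eep, Hexp in B1, B2, B3, B4, B5, B6, B7, B8.
  cbn in B1, B2, B3, B4, B5, B6, B7, B8.
  rewrite K_expand. rewrite <- Emm.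
  assert (HLin : LinE mm e (X1 (xi eta) - 1) (X2 (xi eta)) (X3 (xi eta)) (Z2 (xi eta)) (Z3 (xi eta)) (Z4 (xi eta)) (W (xi eta))
    = ep * LinE mm e (X1 v) (X2 v) (X3 v) (Z2 v) (Z3 v) (Z4 v) (W v) +
      LinE mm e (X1 (xi eta) - (1 + ep * X1 v)) (X2 (xi eta) - (0 + ep * X2 v)) (X3 (xi eta) - (0 + ep * X3 v))
        (Z2 (xi eta) - (0 + ep * Z2 v)) (Z3 (xi eta) - (0 + ep * Z3 v)) (Z4 (xi eta) - (0 + ep * Z4 v))
        (W (xi eta) - (0 + ep * W v))) by (unfold LinE; field).
  rewrite HLin, HL.
  pose proof (lin_bound mm e (C * (ep * x)) _ _ _ _ _ _ _ Hmm He B1 B2 B3 B5 B6 B7 B8) as HLb.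
  rewrite <- ELc in HLb.
  pose proof (dbound _ _ _ ep C x Vb B1 V1 Hep HC Hx1 Hx) as D1.
  pose proof (dbound _ _ _ ep C x Vb B2 V2 Hep HC Hx1 Hx) as D2.
  pose proof (dbound _ _ _ ep C x Vb B3 V3 Hep HC Hx1 Hx) as D3.
  pose proof (dbound _ _ _ ep C x Vb B4 V4 Hep HC Hx1 Hx) as D4.
  pose proof (dbound _ _ _ ep C x Vb B5 V5 Hep HC Hx1 Hx) as D5.
  pose proof (dbound _ _ _ ep C x Vb B6 V6 Hep HC Hx1 Hx) as D6.
  pose proof (dbound _ _ _ ep C x Vb B8 V8 Hep HC Hx1 Hx) as D8.
  rewrite Rminus_0_r in D2, D3, D4, D5, D6, D8.
  pose proof (quad_bound mm e (ep * (Vb + C)) _ _ _ _ _ _ _ Hmm He D1 D2 D3 D4 D5 D6 D8) as HQb.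
  rewrite <- EAq in HQb.
  assert (E1 : Lc * (C * (ep * x)) = ep * (u * x)) by (rewrite Eu; field).
  assert (E2 : Aq * (ep * (Vb + C) * (ep * (Vb + C))) = ep * (w * ep)) by (rewrite Ew; field).
  assert (U1 : u * x <= u * al) by (apply Rmult_le_compat_l; lra).
  assert (U2 : w * ep <= w * be) by (apply Rmult_le_compat_l; lra).
  assert (U3 : 2 * (u * al) < s4) by nra.
  assert (U4 : 2 * (w * be) < s4) by nra.
  assert (U5 : ep * (u * x + w * ep) < ep * s4) by (apply Rmult_lt_compat_l; lra).
  nra.
Qed.

Definition LinP (mm e : R) (p : pt) := LinE mm e (X1 p) (X2 p) (X3 p) (Z2 p) (Z3 p) (Z4 p) (W p).
Lemma LinP_add mm e p q : LinP mm e (padd p q) = LinP mm e p + LinP mm e q.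
Proof. unfold LinP, LinE, padd; cbn [X1 X2 X3 Z1 Z2 Z3 Z4 W]. field. Qed.
Lemma LinP_scale mm e c p : LinP mm e (pscale c p) = c * LinP mm e p.
Proof. unfold LinP, LinE, pscale; cbn [X1 X2 X3 Z1 Z2 Z3 Z4 W]. field. Qed.
Lemma Lw1 m e : LinP (INR m) e (w1 m) = 0.
Proof. unfold LinP, LinE, w1; cbn [X1 X2 X3 Z1 Z2 Z3 Z4 W]. field. Qed.
Lemma Lw2 m e : LinP (INR m) e w2 = 0.
Proof. unfold LinP, LinE, w2; cbn [X1 X2 X3 Z1 Z2 Z3 Z4 W]. field. Qed.
Lemma Lw3 m e : LinP (INR m) e (w3 m) = 0.
Proof. unfold LinP, LinE, w3; cbn [X1 X2 X3 Z1 Z2 Z3 Z4 W]. field. Qed.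
Lemma Lw4 m e : LinP (INR m) e w4 = -1.
Proof. unfold LinP, LinE, w4; cbn [X1 X2 X3 Z1 Z2 Z3 Z4 W]. field. Qed.
Lemma Lw5 m e : LinP (INR m) e (w5 m e) = 0.
Proof. unfold LinP, LinE, w5; cbn [X1 X2 X3 Z1 Z2 Z3 Z4 W]. field. Qed.
Lemma Lw6 m e : LinP (INR m) e w6 = 0.
Proof. unfold LinP, LinE, w6; cbn [X1 X2 X3 Z1 Z2 Z3 Z4 W]. field. Qed.

Theorem proposition4p7 :
  forall (m : nat), (1 <= m)%nat ->
  forall (k : nat) (theta s4 s5 : R),
    (0 < k)%nat -> 0 <= theta <= PI -> 0 < s4 -> 0 <= s5 ->
  forall (xi : R -> pt) (T : Rbar),
    is_xi m (INR k) theta s4 s5 xi T ->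
  forall t1 t2 : R, t1 <= t2 -> Rbar_lt t2 T ->
    (forall s : R, s <= t2 -> inB m (epsof s5) (xi s)) ->
    monf m (epsof s5) (xi t2) <= monf m (epsof s5) (xi t1).
Proof.
  intros m Hm k theta s4 s5 Hk Hth Hs4 Hs5 xi T Hxi t1 t2 H12 Ht2 HB.
  unfold is_xi in Hxi. destruct Hxi as [[Hic _] Has].
  remember (epsof s5) as e eqn:Ee.
  assert (He : 0 <= e <= 1) by (subst e; unfold epsof; destruct (Rlt_dec 0 s5); lra).
  destruct Has as [delta [C [eta0 [Hd [Heta0T Hbd]]]]].
  set (v := padd (wtk m theta (INR k)) (padd (pscale s4 w4) (pscale s5 (w5 m e)))) in Hbd.
  assert (HLv : LinE (INR m) e (X1 v) (X2 v) (X3 v) (Z2 v) (Z3 v) (Z4 v) (W v) = - s4).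
  { change (LinP (INR m) e v = - s4). unfold v, wtk.
    rewrite !LinP_add, !LinP_scale, Lw1, Lw2, Lw3, Lw4, Lw5, Lw6. field. apply Rgt_not_eq, sqrt_lt_R0; lra. }
  clearbody v.
  destruct (early m e s4 xi v delta C eta0 t1 (proj1 He) Hs4 Hd HLv Hbd) as [t0 [Ht01 [Ht0e HK0]]].
  assert (Kneg : forall s, t0 <= s <= t2 -> Kf m e (xi s) < 0).
  { intros s Hs.
    apply (gronwall (fun u => Kf m e (xi u)) (fun u => cf m e (xi u))
      (fun u => (Hf m (xi u) - 1) * (1 - e / 2 * W (xi u)) * Gf m (xi u)) T t0 s).
    - lra.
    - apply rbar_le_lt with t2; auto; lra.
    - intros t Ht. destruct (coords_der m e xi T Hic t Ht) as [h1 [h2 [h3 [h4 [h5 [h6 [h7 h8]]]]]]].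
      eapply dK; eassumption.
    - intros t Ht. destruct (coords_der m e xi T Hic t Ht) as [h1 [h2 [h3 [h4 [h5 [h6 [h7 h8]]]]]]].
      apply (ex_derive_continuous (K:=R_AbsRing) (V:=R_NormedModule)).
      eapply dC; eassumption.
    - intros t Ht. apply rsign; auto. apply HB; lra.
    - exact HK0. }
  set (df := fun s => (((Hf m (xi s) - 1) * (gg m e (xi s) - 1) + Qf m e (xi s)) * sqrt (- Qf m e (xi s)) -
      (Hf m (xi s) - 1) * ((- (2 * Qf m e (xi s) * gg m e (xi s) + e * W (xi s) * (Hf m (xi s) - 1)))
        / (2 * sqrt (- Qf m e (xi s))))) / (sqrt (- Qf m e (xi s))) ^ 2).
  assert (Hder : forall s, t1 <= s <= t2 -> is_derive (fun u => monf m e (xi u)) s (df s)).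
  { intros s Hs.
    assert (Hs' : Rbar_lt s T) by (apply rbar_le_lt with t2; auto; lra).
    destruct (coords_der m e xi T Hic s Hs') as [h1 [h2 [h3 [h4 [h5 [h6 [h7 h8]]]]]]].
    assert (HKs := Kneg s ltac:(lra)). unfold Kf in HKs.
    destruct (HB s ltac:(lra)) as [[HQ [HH [HW _]]] _].
    assert (0 <= (1 - Hf m (xi s)) * (1 + e / 2 * W (xi s))) by
      (apply Rmult_le_pos; [lra | assert (0 <= e * W (xi s)) by (apply Rmult_le_pos; lra); lra]).
    assert (Qneg : 0 < - Qf m e (xi s)) by lra.
    assert (Hsq : 0 < sqrt (- Qf m e (xi s))) by (apply sqrt_lt_R0; lra).
    unfold monf, df.
    apply (is_derive_div (fun u => Hf m (xi u) - 1) (fun u => sqrt (- Qf m e (xi u)))).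
    - eapply dH; eassumption.
    - apply (is_derive_sqrt (fun u => - Qf m e (xi u))).
      eapply dQn; eassumption. exact Qneg.
    - apply Rgt_not_eq; exact Hsq. }
  assert (Hsign : forall s, t1 <= s <= t2 -> df s <= 0).
  { intros s Hs. destruct (HB s ltac:(lra)) as [[HQ [HH [HW _]]] _].
    assert (HKs := Kneg s ltac:(lra)). unfold Kf in HKs.
    unfold df. apply sign_alg; auto; lra. }
  destruct (MVT_gen (fun u => monf m e (xi u)) t1 t2 df) as [c0 [Hc0 Heq]].
  - intros x Hx. rewrite Rmin_left, Rmax_right in Hx by lra. apply Hder; lra.
  - intros x Hx. rewrite Rmin_left, Rmax_right in Hx by lra.
    apply continuity_pt_filterlim.
    apply (ex_derive_continuous (K:=R_AbsRing) (V:=R_NormedModule) (fun u => monf m e (xi u)) x).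
    eexists; apply Hder; lra.
  - rewrite Rmin_left, Rmax_right in Hc0 by lra.
    assert (Hs0 := Hsign c0 Hc0).
    assert (0 <= - df c0 * (t2 - t1)) by (apply Rmult_le_pos; lra).
    simpl in Heq. nra.
Qed.
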